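(* Let $T,S$ be two causal teams over $\sigma$ with $T\approx S$, or two generalized causal teams over $\sigma$ with $T\approx S$. Then for every formula $\varphi$ of $\mathcal{CO}[\sigma]$, $\mathcal{CO}_{\sqcup}[\sigma]$ or $\mathcal{COD}[\sigma]$, we have $T\models\varphi$ if and only if $S\models\varphi$ (with $\models^c$ for causal teams, $\models^g$ for generalized causal teams).
   Context: A signature $\sigma=(\mathrm{Dom},\mathrm{Ran})$: $\mathrm{Dom}$ nonempty finite set of variables, each $X$ with nonempty finite range $\mathrm{Ran}(X)$. $\mathbf X=\mathbf x$ abbreviates $X_1=x_1\wedge\dots\wedge X_n=x_n$ ($\mathbf x\in\mathrm{Ran}(\mathbf X)=\prod_i\mathrm{Ran}(X_i)$); inconsistent if it contains $X=x,X=x'$ with $x\ne x'$. Languages: $\mathcal{CO}[\sigma]$: $\alpha::=X=x\mid\neg\alpha\mid\alpha\wedge\alpha\mid\alpha\vee\alpha\mid\mathbf X=\mathbf x\;\Box\!\!\rightarrow\alpha$; $\mathcal{CO}_{\sqcup}[\sigma]$: $\varphi::=X=x\mid\neg\alpha\mid\varphi\wedge\varphi\mid\varphi\vee\varphi\mid\varphi\sqcup\varphi\mid\mathbf X=\mathbf x\;\Box\!\!\rightarrow\varphi$; $\mathcal{COD}[\sigma]$: $\varphi::=X=x\mid{=}(\mathbf X;Y)\mid\neg\alpha\mid\varphi\wedge\varphi\mid\varphi\vee\varphi\mid\mathbf X=\mathbf x\;\Box\!\!\rightarrow\varphi$ (always $\alpha\in\mathcal{CO}[\sigma]$). Assignments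 $s$ ($s(X)\in\mathrm{Ran}(X)$) form $\mathbb A_\sigma$. A system of functions $\mathcal F$ gives for each $V\in\mathrm{En}(\mathcal F)\subseteq\mathrm{Dom}$ parents $PA^{\mathcal F}_V\subseteq\mathrm{Dom}\setminus\{V\}$ and $\mathcal F_V:\mathrm{Ran}(PA^{\mathcal F}_V)\to\mathrm{Ran}(V)$; $\mathrm{Ex}(\mathcal F)=\mathrm{Dom}\setminus\mathrm{En}(\mathcal F)$; only recursive (acyclic parent graph) systems, forming $\mathbb F_\sigma$. $s$ compatible with $\mathcal F$: $s(V)=\mathcal F_V(s(PA^{\mathcal F}_V))$ for $V\in\mathrm{En}(\mathcal F)$; $\mathbb S_\sigma$ the set of compatible pairs. For consistent $\mathbf X=\mathbf x$: $\mathcal F_{\mathbf X=\mathbf x}$ restricts $\mathcal F$ to $\mathrm{En}(\mathcal F)\setminus\mathbf X$; $s^{\mathcal F}_{\mathbf X=\mathbf x}$: $X_i\mapsto x_i$, $V\mapsto s(V)$ on $\mathrm{Ex}(\mathcal F)\setminus\mathbf X$, $V\mapsto\mathcal F_V(s^{\mathcal F}_{\mathbf X=\mathbf x}(PA^{\mathcal F}_V))$ on $\mathrm{En}(\mathcal F)\setminus\mathbf X$. Causal team $T=(T^-,\mathcal F)$: $T^-$ a set of assignments compatible with $\mathcal F$; empty team components identified as $\emptyset$; causal subteams $(S^-,\mathcal F)$ with $S^-\subseteq T^-$; $T_{\mathbf X=\mathbf x}=(\{s^{\mathcal F}_{\mathbf X=\mathbf x}:s\in T^-\},\mathcal F_{\mathbf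 X=\mathbf x})$. $\models^c$: $T\models X=x$ iff all $s\in T^-$ have $s(X)=x$; $T\models{=}(\mathbf X;Y)$ iff $s(\mathbf X)=s'(\mathbf X)$ implies $s(Y)=s'(Y)$ for $s,s'\in T^-$; $T\models\neg\alpha$ iff $(\{s\},\mathcal F)\not\models\alpha$ for all $s\in T^-$; $\wedge$ classical; $T\models\varphi\vee\psi$ iff there are causal subteams $T_1,T_2$ with $T_1^-\cup T_2^-=T^-$, $T_1\models\varphi$, $T_2\models\psi$; $T\models\varphi\sqcup\psi$ iff $T\models\varphi$ or $T\models\psi$; $T\models\mathbf X=\mathbf x\;\Box\!\!\rightarrow\varphi$ iff $\mathbf X=\mathbf x$ inconsistent or $T_{\mathbf X=\mathbf x}\models\varphi$. Generalized causal team: $T\subseteq\mathbb S_\sigma$, $T^-=\{s:(s,\mathcal F)\in T\}$, $T_{\mathbf X=\mathbf x}=\{(s^{\mathcal F}_{\mathbf X=\mathbf x},\mathcal F_{\mathbf X=\mathbf x}):(s,\mathcal F)\in T\}$; $\models^g$: same clauses but $T\models\neg\alpha$ iff $\{(s,\mathcal F)\}\not\models\alpha$ for all $(s,\mathcal F)\in T$, and $T\models\varphi\vee\psi$ iff $T=T_1\cup T_2$, $T_1\models\varphi$, $T_2\models\psi$. Equivalence: $\mathrm{Cn}(\mathcal F)=\{V\in\mathrm{En}(\mathcal F):\mathcal F_V\text{ constant}\}$; $\mathcal F_V\sim\mathcal G_V$ iff $\mathcal F_V(\mathbf x\mathbf y)=\mathcal G_V(\mathbf x\mathbf z)$ for all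 $\mathbf x\in\mathrm{Ran}(PA^{\mathcal F}_V\cap PA^{\mathcal G}_V)$, $\mathbf y\in\mathrm{Ran}(PA^{\mathcal F}_V\setminus PA^{\mathcal G}_V)$, $\mathbf z\in\mathrm{Ran}(PA^{\mathcal G}_V\setminus PA^{\mathcal F}_V)$; $\mathcal F\sim\mathcal G$ iff $\mathrm{En}(\mathcal F)\setminus\mathrm{Cn}(\mathcal F)=\mathrm{En}(\mathcal G)\setminus\mathrm{Cn}(\mathcal G)$ and $\mathcal F_V\sim\mathcal G_V$ for each such $V$. Nonempty causal teams $(T^-,\mathcal F)\approx(S^-,\mathcal G)$ iff $T^-=S^-$ and $\mathcal F\sim\mathcal G$. Generalized: $T^{\mathcal F}=\{(s,\mathcal G)\in T:\mathcal G\sim\mathcal F\}$ and $S\approx T$ iff $(S^{\mathcal F})^-=(T^{\mathcal F})^-$ for all $\mathcal F\in\mathbb F_\sigma$. *)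

(* Defs.v *)
From HB Require Import structures.
From mathcomp Require Import all_boot.
Set Implicit Arguments. Unset Strict Implicit. Unset Printing Implicit Defensive.

Section Causal.
Variables (V : finType) (R : V -> finType).

Definition assign := {dffun forall v : V, R v}.

(* A system of functions: for each variable v, [Fn v] is [None] iff v is
   exogenous, and [Some f] with f : assignments -> Ran(v) iff v is endogenous;
   [PA v] is the parent set. f represents F_v : Ran(PA_v) -> Ran(v) via the
   well-formedness condition that f only depends on the PA_v-coordinates. *)
Record sysfun := Sysfun {
  PA : {ffun V -> {set V}};
  Fn : {dffun forall v : V, option {ffun assign -> R v}} }.

Definition En (F : sysfun) : {set V} := [set v | Fn F v != None].

Definition parent_rel (F : sysfun) : rel V := fun u v => u \in PA F v.

(* Membership in F_sigma: well-formed and recursive (acyclic). *)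
Definition wf (F : sysfun) : Prop :=
  [/\ (forall v, Fn F v = None -> PA F v = set0),
      (forall v, v \notin PA F v),
      (forall v f, Fn F v = Some f ->
         forall s t : assign, (forall u, u \in PA F v -> s u = t u) -> f s = f t)
    & (forall u v, parent_rel F u v -> ~~ connect (parent_rel F) v u)].

Definition compatible (F : sysfun) (s : assign) : Prop :=
  forall v f, Fn F v = Some f -> s v = f s.

Definition interv_t := seq {v : V & R v}.

Definition inXs (X : interv_t) (v : V) : bool := has (fun p => tag p == v) X.

Definition consistent (X : interv_t) : Prop :=
  forall p q, p \in X -> q \in X -> tag p = tag q -> p = q.

Definition restrict (F : sysfun) (X : interv_t) : sysfun :=
  Sysfun [ffun v => if inXs X v then set0 else PA F v]
         [ffun v => if inXs X v then None else Fn F v].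

(* t = s^F_{X=x}: the clauses of the (recursive) definition of the
   intervened assignment. *)
Definition interv (F : sysfun) (X : interv_t) (s t : assign) : Prop :=
  [/\ (forall p, p \in X -> t (tag p) = tagged p),
      (forall v, ~~ inXs X v -> Fn F v = None -> t v = s v)
    & (forall v f, ~~ inXs X v -> Fn F v = Some f -> t v = f t)].

Inductive form : Type :=
  | Atm (v : V) (x : R v)
  | Dep (Xs : seq V) (y : V)
  | Neg (a : form)
  | And (a b : form)
  | Or (a b : form)
  | Tor (a b : form)
  | Cf (X : interv_t) (a : form).

Fixpoint isCO (phi : form) : bool :=
  match phi with
  | Atm _ _ => true
  | Dep _ _ => false
  | Neg a => isCO a
  | And a b | Or a b => isCO a && isCO b
  | Tor _ _ => false
  | Cf _ a => isCO a
  end.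

Fixpoint isCOsq (phi : form) : bool :=
  match phi with
  | Atm _ _ => true
  | Dep _ _ => false
  | Neg a => isCO a
  | And a b | Or a b | Tor a b => isCOsq a && isCOsq b
  | Cf _ a => isCOsq a
  end.

Fixpoint isCOD (phi : form) : bool :=
  match phi with
  | Atm _ _ | Dep _ _ => true
  | Neg a => isCO a
  | And a b | Or a b => isCOD a && isCOD b
  | Tor _ _ => false
  | Cf _ a => isCOD a
  end.

Definition causal_team (F : sysfun) (T : assign -> Prop) : Prop :=
  wf F /\ forall s, T s -> compatible F s.

Fixpoint sat_c (phi : form) : sysfun -> (assign -> Prop) -> Prop :=
  match phi with
  | Atm v x => fun F T => forall s, T s -> s v = x
  | Dep Xs y => fun F T => forall s s', T s -> T s' ->
        (forall u, u \in Xs -> s u = s' u) -> s y = s' y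
  | Neg a => fun F T => forall s, T s -> ~ sat_c a F (fun t => t = s)
  | And a b => fun F T => sat_c a F T /\ sat_c b F T
  | Or a b => fun F T => exists T1 T2 : assign -> Prop,
        [/\ (forall s, T1 s -> T s), (forall s, T2 s -> T s),
            (forall s, T s -> T1 s \/ T2 s), sat_c a F T1 & sat_c b F T2]
  | Tor a b => fun F T => sat_c a F T \/ sat_c b F T
  | Cf X a => fun F T => ~ consistent X \/
        sat_c a (restrict F X) (fun t => exists s, T s /\ interv F X s t)
  end.

Definition gteam (T : assign -> sysfun -> Prop) : Prop :=
  forall s F, T s F -> wf F /\ compatible F s.

Fixpoint sat_g (phi : form) : (assign -> sysfun -> Prop) -> Prop :=
  match phi with
  | Atm v x => fun T => forall s F, T s F -> s v = x
  | Dep Xs y => fun T => forall s F s' F', T s F -> T s' F' ->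
        (forall u, u \in Xs -> s u = s' u) -> s y = s' y
  | Neg a => fun T => forall s F, T s F ->
        ~ sat_g a (fun s' F' => s' = s /\ F' = F)
  | And a b => fun T => sat_g a T /\ sat_g b T
  | Or a b => fun T => exists T1 T2 : assign -> sysfun -> Prop,
        [/\ (forall s F, T1 s F -> T s F), (forall s F, T2 s F -> T s F),
            (forall s F, T s F -> T1 s F \/ T2 s F), sat_g a T1 & sat_g b T2]
  | Tor a b => fun T => sat_g a T \/ sat_g b T
  | Cf X a => fun T => ~ consistent X \/
        sat_g a (fun t G' => exists s G, [/\ T s G, interv G X s t & G' = restrict G X])
  end.

Definition Cn (F : sysfun) : {set V} :=
  [set v | if Fn F v is Some f then [forall s, forall t, f s == f t] else false].

Definition sim_fun (F G : sysfun) (v : V) : Prop :=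
  forall f g, Fn F v = Some f -> Fn G v = Some g ->
  forall s t : assign, (forall u, u \in PA F v :&: PA G v -> s u = t u) -> f s = g t.

Definition simF (F G : sysfun) : Prop :=
  En F :\: Cn F = En G :\: Cn G /\ forall v, v \in En F :\: Cn F -> sim_fun F G v.

(* (T^-,F) ~ (S^-,G): same assignment set, and F ~ G (the latter only
   required for nonempty teams; empty teams are all identified with the
   empty team). *)
Definition approx_c (F : sysfun) (T : assign -> Prop) (G : sysfun) (S : assign -> Prop) : Prop :=
  (forall s, T s <-> S s) /\ ((exists s, T s) -> simF F G).

(* generalized: (S^F)^- = (T^F)^- for every F in F_sigma *)
Definition approx_g (T S : assign -> sysfun -> Prop) : Prop :=
  forall F, wf F -> forall s,
    (exists G, T s G /\ simF G F) <-> (exists G, S s G /\ simF G F).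

End Causal.

(* Main.v *)
Require Import Defs.
From mathcomp Require Import all_boot.
Set Implicit Arguments. Unset Strict Implicit. Unset Printing Implicit Defensive.

Section Proof.
Variables (V : finType) (R : V -> finType).
Implicit Types (F G : sysfun R) (s t : assign R).

Definition eqv F G :=
  (forall v, (v \in En F :\: Cn F) = (v \in En G :\: Cn G)) /\
  (forall v f g, v \in En F :\: Cn F -> Fn F v = Some f -> Fn G v = Some g ->
     forall s, f s = g s).

Lemma eqv_sym F G : eqv F G -> eqv G F.
Proof.
case=> E1 E2; split; first by move=> v; rewrite E1.
move=> v f g vG GN FN s; rewrite -E1 in vG; by rewrite (E2 v g f vG FN GN s).
Qed.

Lemma memEC F v : (v \in En F :\: Cn F) = (v \notin Cn F) && (Fn F v != None).
Proof. by rewrite /En !inE. Qed.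

Lemma CnP F v f : Fn F v = Some f -> v \in Cn F -> forall s t, f s = f t.
Proof.
move=> FN; rewrite /Cn inE FN => /forallP H1 s t; apply/eqP; exact: (forallP (H1 s) t).
Qed.

Lemma transfer F G X s t :
  compatible F s -> compatible G s -> eqv F G -> interv F X s t -> interv G X s t.
Proof.
move=> cF cG [Ee Ef] [h1 h2 h3]; split => //.
- move=> v nX GN.
  case FN: (Fn F v) => [f|]; last exact: h2.
  have vC : v \in Cn F.
    apply: contraT => nC.
    have : v \in En F :\: Cn F by rewrite memEC nC FN.
    by rewrite Ee memEC GN andbF.
  by rewrite (h3 v f nX FN) (CnP FN vC t s) -(cF v f FN).
- move=> v g nX GN.
  case: (boolP (v \in Cn G)) => vC.
  + rewrite (CnP GN vC t s) -(cG v g GN).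
    case FN: (Fn F v) => [f|]; last exact: h2.
    rewrite (h3 v f nX FN).
    case: (boolP (v \in Cn F)) => fC; first by rewrite (CnP FN fC t s) -(cF v f FN).
    have : v \in En F :\: Cn F by rewrite memEC fC FN.
    by rewrite Ee memEC vC.
  + have vG : v \in En G :\: Cn G by rewrite memEC vC GN.
    have vF := vG; rewrite -Ee in vF.
    case FN: (Fn F v) => [f|]; last by move: vF; rewrite memEC FN andbF.
    by rewrite (h3 v f nX FN) (Ef v f g vF FN GN t).
Qed.

Lemma memR F X v :
  (v \in En (restrict F X) :\: Cn (restrict F X)) = ~~ inXs X v && (v \in En F :\: Cn F).
Proof. rewrite !memEC /Cn !inE /restrict /= !ffunE; by case: (inXs X v). Qed.

Lemma eqv_restrict F G X : eqv F G -> eqv (restrict F X) (restrict G X).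
Proof.
case=> E1 E2; split; first by move=> v; rewrite !memR E1.
move=> v f g; rewrite memR => /andP [nX vF] /=; rewrite !ffunE (negbTE nX).
exact: E2.
Qed.

Lemma interv_compat F X s t : interv F X s t -> compatible (restrict F X) t.
Proof.
case=> _ _ h3 v f /=; rewrite ffunE; case: ifP => // /negbT nX FN; exact: h3.
Qed.

Definition ICinv F (T : assign R -> Prop) G (S : assign R -> Prop) :=
  [/\ (forall s, T s <-> S s), (forall s, T s -> compatible F s),
      (forall s, S s -> compatible G s) & ((exists s, T s) -> eqv F G)].

Lemma causal_main (phi : form R) : forall F G T S, ICinv F T G S ->
  sat_c phi F T -> sat_c phi G S.
Proof.
elim: phi => [v x|Xs y|a IHa|a IHa b IHb|a IHa b IHb|a IHa b IHb|X a IHa]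
  F G T S Hinv; case: (Hinv) => TS cT cS E /=.
- move=> H s Ss; apply: H; exact/TS.
- move=> H s s' Ss Ss' agr; apply: H => //; exact/TS.
- move=> H s Ss sa; apply: (H s ((TS s).2 Ss)).
  apply: (IHa G F (fun t => t = s) (fun t => t = s)) => //.
  split.
  + by [].
  + by move=> t ->; exact: cS.
  + by move=> t ->; exact: cT ((TS s).2 Ss).
  + by move=> _; apply: eqv_sym; apply: E; exists s; exact/TS.
- by case=> h1 h2; split; [apply: (IHa F G T S) | apply: (IHb F G T S)].
- case=> T1 [T2 [s1 s2 cov h1 h2]]; exists T1, T2; split.
  + by move=> s h; apply/TS/s1.
  + by move=> s h; apply/TS/s2.
  + by move=> s h; apply/cov/TS.
  + apply: (IHa F G T1 T1) => //; split.
    * by [].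
    * move=> t h; exact: cT (s1 t h).
    * move=> t h; exact: cS ((TS t).1 (s1 t h)).
    * case=> t h; apply: E; exists t; exact: s1.
  + apply: (IHb F G T2 T2) => //; split.
    * by [].
    * move=> t h; exact: cT (s2 t h).
    * move=> t h; exact: cS ((TS t).1 (s2 t h)).
    * case=> t h; apply: E; exists t; exact: s2.
- by case=> h; [left; apply: (IHa F G T S) | right; apply: (IHb F G T S)].
- case=> [nc|h]; [by left|right].
  apply: (IHa (restrict F X) (restrict G X) _ _ _ h); split.
  + move=> t; split; case=> s [Ts it]; exists s.
    * have Ss := (TS s).1 Ts; split => //.
      exact: transfer (cT s Ts) (cS s Ss) (E (ex_intro _ s Ts)) it.
    * have Ts' := (TS s).2 Ts; split => //.
      exact: transfer (cS s Ts) (cT s Ts') (eqv_sym (E (ex_intro _ s Ts'))) it.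
  + by move=> t [s [_ it]]; apply: interv_compat it.
  + by move=> t [s [_ it]]; apply: interv_compat it.
  + by case=> t [s [Ts _]]; apply: eqv_restrict; apply: E; exists s.
Qed.

Definition half (T S : assign R -> sysfun R -> Prop) :=
  forall s F, T s F -> compatible F s /\ exists G, S s G /\ eqv F G.

Lemma half_cf (T S : assign R -> sysfun R -> Prop) X :
  half T S -> half S T ->
  half (fun t G' => exists s G, [/\ T s G, interv G X s t & G' = restrict G X])
       (fun t G' => exists s G, [/\ S s G, interv G X s t & G' = restrict G X]).
Proof.
move=> hTS hST t G' [s [F [TF it ->]]].
have [cF [G [SG e]]] := hTS s F TF.
have cG := (hST s G SG).1.
split; first exact: interv_compat it.
exists (restrict G X); split; last exact: eqv_restrict.
exists s, G; split => //; exact: transfer cF cG e it.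
Qed.

Lemma gen_main (phi : form R) : forall T S, half T S -> half S T ->
  sat_g phi T -> sat_g phi S.
Proof.
elim: phi => [v x|Xs y|a IHa|a IHa b IHb|a IHa b IHb|a IHa b IHb|X a IHa]
  T S hTS hST /=.
- move=> H s G SG; case: (hST s G SG) => _ [F [TF _]]; exact: H s F TF.
- move=> H s G s' G' SG SG' agr.
  case: (hST s G SG) => _ [F [TF _]]; case: (hST s' G' SG') => _ [F' [TF' _]].
  exact: H s F s' F' TF TF' agr.
- move=> H s G SG sa; case: (hST _ _ SG) => cG [F [TF e]].
  apply: (H s F TF); apply: (IHa (fun s' F' => s' = s /\ F' = G)) sa.
  + move=> s' G' [-> ->]; split => //; exists F; split => //.
  + move=> s' F' [-> ->]; split; first exact: (hTS s F TF).1.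
    exists G; split => //; exact: eqv_sym.
- by case=> h1 h2; split; [apply: (IHa T S) | apply: (IHb T S)].
- case=> T1 [T2 [s1 s2 cov h1 h2]].
  exists (fun s G => S s G /\ exists F, T1 s F /\ eqv G F),
         (fun s G => S s G /\ exists F, T2 s F /\ eqv G F); split.
  + by move=> s G [].
  + by move=> s G [].
  + move=> s G SG; case: (hST s G SG) => _ [F [TF e]].
    by case: (cov s F TF) => h; [left|right]; split => //; exists F.
  + apply: (IHa T1) => //.
    * move=> s F T1F; have [cF [G [SG e]]] := hTS s F (s1 _ _ T1F).
      split => //; exists G; split => //; split => //; exists F; split => //.
      exact: eqv_sym.
    * move=> s G [SG [F [T1F e]]]; split; first exact: (hST s G SG).1.
      by exists F.
  + apply: (IHb T2) => //.
    * move=> s F T1F; have [cF [G [SG e]]] := hTS s F (s2 _ _ T1F).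
      split => //; exists G; split => //; split => //; exists F; split => //.
      exact: eqv_sym.
    * move=> s G [SG [F [T1F e]]]; split; first exact: (hST s G SG).1.
      by exists F.
- by case=> h; [left; apply: (IHa T S) | right; apply: (IHb T S)].
- case=> [nc|h]; [by left|right].
  apply: (IHa _ _ _ _ h); exact: half_cf.
Qed.

Lemma simF_eqv F G : simF F G -> eqv F G.
Proof.
case=> Es Hs; split; first by move=> v; rewrite Es.
move=> v f g vF FN GN s; exact: (Hs v vF f g FN GN s s (fun _ _ => erefl)).
Qed.

Lemma simF_refl F : wf F -> simF F F.
Proof.
move=> wF; split => // v _ f g FN FN' s t agr.
rewrite FN in FN'; case: FN' => <-.
case: wF => _ _ h3 _; apply: (h3 v f FN s t) => u uP; apply: agr; by rewrite setIid.
Qed.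

End Proof.

Theorem theorem3p3 (V : finType) (R : V -> finType)
    (HV : 0 < #|V|) (HR : forall v, 0 < #|R v|) :
  (forall (F G : sysfun R) (T S : assign R -> Prop),
      causal_team F T -> causal_team G S -> approx_c F T G S ->
      forall phi : form R, isCO phi || isCOsq phi || isCOD phi ->
      (sat_c phi F T <-> sat_c phi G S))
  /\
  (forall T S : assign R -> sysfun R -> Prop,
      gteam T -> gteam S -> approx_g T S ->
      forall phi : form R, isCO phi || isCOsq phi || isCOD phi ->
      (sat_g phi T <-> sat_g phi S)).
Proof.
split.
- move=> F G T S [_ cT] [_ cS] [TS E] phi _.
  have Hi : ICinv F T G S.
    by split => // h; apply: simF_eqv; apply: E.
  split; apply: causal_main => //.
  case: Hi => H1 H2 H3 H4; split.
  + by move=> s; split => h; apply/H1.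
  + exact: H3.
  + exact: H2.
  + by case=> s h; apply: eqv_sym; apply: H4; exists s; apply/H1.
- move=> T S gT gS A phi _.
  have h1 : half T S.
    move=> s F TF; have [wF cF] := gT s F TF.
    have [G [SG e]] := (A F wF s).1 (ex_intro _ F (conj TF (simF_refl wF))).
    split => //; exists G; split => //; exact: eqv_sym (simF_eqv e).
  have h2 : half S T.
    move=> s F SF; have [wF cF] := gS s F SF.
    have [G [TG e]] := (A F wF s).2 (ex_intro _ F (conj SF (simF_refl wF))).
    split => //; exists G; split => //; exact: eqv_sym (simF_eqv e).
  by split; apply: gen_main.
Qed.
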